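(* Let $k\ge 3$ and $N\ge 1$ be integers, and let $A\subseteq\{1,\dots,N\}$ be a non-empty set containing no $k$AP. Let $E_N\subset[0,1]$ be the self-similar attractor of the iterated function system $\{f_j: j\in A\}$, where $f_j(x)=\frac{x}{12N}+\frac{6j}{12N}$, i.e. $E_N=\bigcap_{\ell\ge 1}\bigcup_{i_1,\dots,i_\ell\in A} f_{i_1}\circ\cdots\circ f_{i_\ell}([0,1])$. Then $\dim_H(E_N)=\frac{\log\#A}{\log(12N)}$, and $E_N$ $\varepsilon_N$-avoids $k$APs, where $\varepsilon_N=\frac{1}{12N}$.
   Context: A $k$-term arithmetic progression ($k$AP) is a set $P=\{x, x+\lambda, \dots, x+(k-1)\lambda\}\subset\mathbb{R}$ with $\lambda>0$, called the gap length of $P$. A set $E\subset\mathbb{R}$ $\varepsilon$-avoids $k$APs if for every $k$AP $P$ with gap length $\lambda$ one has $\sup_{p\in P}\inf_{x\in E}|x-p|\ge\varepsilon\lambda$. *)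

(* Defs.v *)
From Stdlib Require Import Reals Lra List.
Import ListNotations.
Open Scope R_scope.

Definition diam_le (U : R -> Prop) (d : R) : Prop :=
  forall x y, U x -> U y -> Rabs (x - y) <= d.

(* d^s with the convention 0^s = 0 (used only for s > 0). *)
Definition pw (d s : R) : R := if Rlt_dec 0 d then Rpower d s else 0.

(* H^s_delta(E) = 0 : for every eta > 0 there is a countable delta-cover
   (U_n) of E, with diam U_n <= d_n <= delta, whose sum of d_n^s is <= eta.
   (Using upper bounds d_n for the diameters gives the same infimum.) *)
Definition hausdorff_content_zero (s delta : R) (E : R -> Prop) : Prop :=
  forall eta, 0 < eta ->
    exists (U : nat -> R -> Prop) (d : nat -> R),
      (forall x, E x -> exists n, U n x) /\
      (forall n, 0 <= d n <= delta /\ diam_le (U n) (d n)) /\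
      (forall m, sum_f_R0 (fun n => pw (d n) s) m <= eta).

(* H^s(E) = lim_{delta -> 0} H^s_delta(E) = 0; since H^s_delta increases as
   delta decreases, this holds iff H^s_delta(E) = 0 for every delta > 0. *)
Definition hausdorff_measure_zero (s : R) (E : R -> Prop) : Prop :=
  forall delta, 0 < delta -> hausdorff_content_zero s delta E.

Definition is_glb (S : R -> Prop) (m : R) : Prop :=
  (forall x, S x -> m <= x) /\ (forall b, (forall x, S x -> b <= x) -> b <= m).

Definition hausdorff_dim_eq (E : R -> Prop) (v : R) : Prop :=
  is_glb (fun s => 0 < s /\ hausdorff_measure_zero s E) v.

Definition contains_nat_kAP (k : nat) (A : list nat) : Prop :=
  exists x lam : nat, (0 < lam)%nat /\
    forall i : nat, (i < k)%nat -> In (x + i * lam)%nat A.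

(* E epsilon-avoids kAPs: for every kAP P = {x + i lam : i < k}, lam > 0,
   sup_{p in P} inf_{e in E} |e - p| >= eps * lam.  Since P is finite, the
   sup is a max, and inf_{e in E} |e - p| >= c means every e in E has
   |e - p| >= c. *)
Definition eps_avoids_kAP (k : nat) (eps : R) (E : R -> Prop) : Prop :=
  forall x lam : R, 0 < lam ->
    exists i : nat, (i < k)%nat /\
      forall e, E e -> Rabs (e - (x + INR i * lam)) >= eps * lam.

Definition fmap (N j : nat) (x : R) : R :=
  x / (12 * INR N) + 6 * INR j / (12 * INR N).

Definition fcomp (N : nat) (w : list nat) (y : R) : R :=
  fold_right (fun j z => fmap N j z) y w.

Definition attractor (N : nat) (A : list nat) (x : R) : Prop :=
  forall l : nat, (1 <= l)%nat ->
    exists w : list nat, length w = l /\ Forall (fun j => In j A) w /\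
      exists y, 0 <= y <= 1 /\ x = fcomp N w y.

(* Main.v *)
Require Import Defs.
From Stdlib Require Import Reals Lra Lia List Classical ClassicalEpsilon.
Import ListNotations.
Open Scope R_scope.


Definition rr (N : nat) : R := 1 / (12 * INR N).

Lemma rr_pos N : (1 <= N)%nat -> 0 < rr N.
Proof. intros H. unfold rr. apply le_INR in H. simpl in H.
  apply Rdiv_lt_0_compat; lra. Qed.

Lemma rr_le N : (1 <= N)%nat -> rr N <= 1/12.
Proof. intros H. apply le_INR in H. simpl in H. unfold rr.
  apply Rmult_le_reg_r with (12 * INR N); [lra|].
  field_simplify; try lra. Qed.

Lemma rrN N : (1 <= N)%nat -> 12 * INR N * rr N = 1.
Proof. intros H. apply le_INR in H. simpl in H. unfold rr. field. lra. Qed.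

Lemma fmap_eq N j x : fmap N j x = rr N * x + 6 * INR j * rr N.
Proof. unfold fmap, rr, Rdiv. ring. Qed.

Lemma fcomp_cons N j w y : fcomp N (j :: w) y = fmap N j (fcomp N w y).
Proof. reflexivity. Qed.

Lemma fcomp_affine N w y : fcomp N w y = fcomp N w 0 + rr N ^ length w * y.
Proof. induction w as [|j w IH]; simpl. ring.
  rewrite !fmap_eq, IH. ring. Qed.

Lemma fcomp_app N u v y : fcomp N (u ++ v) y = fcomp N u (fcomp N v y).
Proof. unfold fcomp. apply fold_right_app. Qed.

Lemma fmap_range N j y : (1 <= N)%nat -> (j <= N)%nat -> 0 <= y <= 1 ->
  6 * INR j * rr N <= fmap N j y <= 6 * INR j * rr N + rr N /\ 0 <= fmap N j y <= 1.
Proof. intros HN Hj Hy. rewrite fmap_eq. pose proof (rr_pos N HN).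
  pose proof (rrN N HN). apply le_INR in Hj. pose proof (pos_INR j).
  assert (6 * INR j * rr N + rr N <= 1).
  { assert (0 <= (INR N - INR j) * rr N) by (apply Rmult_le_pos; lra).
    assert (0 <= (6 * INR N - 1) * rr N) by (apply Rmult_le_pos; [apply le_INR in HN; simpl in HN; lra|lra]). nra. }
  split; split; try nra. Qed.

Lemma fcomp_range N A w y : (1 <= N)%nat -> (forall j, In j A -> (1 <= j <= N)%nat) ->
  Forall (fun j => In j A) w -> 0 <= y <= 1 -> 0 <= fcomp N w y <= 1.
Proof. intros HN HA Hw Hy. induction Hw as [|j w Hj Hw IH]; simpl; auto.
  apply fmap_range; auto. apply HA in Hj; lia. Qed.

Lemma sep N j j' x : (1 <= N)%nat ->
  6 * INR j * rr N <= x <= 6 * INR j * rr N + rr N ->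
  6 * INR j' * rr N <= x <= 6 * INR j' * rr N + rr N -> j = j'.
Proof. intros HN H1 H2. pose proof (rr_pos N HN).
  destruct (Nat.lt_trichotomy j j') as [Hl|[He|Hl]]; auto;
  apply le_INR in Hl; rewrite S_INR in Hl; nra. Qed.



Fixpoint words (A : list nat) (l : nat) : list (list nat) :=
  match l with
  | O => [[]]
  | S l => flat_map (fun j => map (cons j) (words A l)) A
  end.

Lemma in_words A l w : In w (words A l) <-> length w = l /\ Forall (fun j => In j A) w.
Proof.
  revert w; induction l as [|l IH]; intros w; simpl.
  - split. intros [<-|[]]. split; auto. intros [H _]. destruct w; [auto|discriminate].
  - rewrite in_flat_map. split.
    + intros [j [Hj Hw]]. apply in_map_iff in Hw. destruct Hw as [w' [<- Hw']].
      apply IH in Hw'. destruct Hw'. simpl. split; auto.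
    + intros [Hl Hf]. destruct w as [|j w']; [discriminate|].
      inversion Hf; subst. exists j; split; auto. apply in_map. apply IH.
      simpl in Hl; split; auto.
Qed.

Lemma flat_len (B : list nat) (W : list (list nat)) :
  length (flat_map (fun j => map (cons j) W) B) = (length B * length W)%nat.
Proof. induction B as [|a B IH]; simpl; auto. rewrite length_app, length_map, IH. lia. Qed.

Lemma words_len A l : length (words A l) = (length A ^ l)%nat.
Proof. induction l as [|l IH]; simpl; auto. rewrite flat_len, IH. lia. Qed.

Definition Cl (N : nat) (A : list nat) (l : nat) (x : R) : Prop :=
  exists w : list nat, length w = l /\ Forall (fun j => In j A) w /\
      exists y, 0 <= y <= 1 /\ x = fcomp N w y.

Lemma pt_in_Cl N A w y l : (1 <= N)%nat -> (forall j, In j A -> (1 <= j <= N)%nat) ->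
  Forall (fun j => In j A) w -> (l <= length w)%nat -> 0 <= y <= 1 -> Cl N A l (fcomp N w y).
Proof.
  intros HN HA Hw Hl Hy. rewrite <- (firstn_skipn l w) in Hw |- *.
  apply Forall_app in Hw. destruct Hw as [H1 H2].
  exists (firstn l w). split. rewrite length_firstn. lia. split; auto.
  exists (fcomp N (skipn l w) y). split. apply (fcomp_range N A); auto.
  apply fcomp_app.
Qed.

Lemma Cl_mono N A l m x : (1 <= N)%nat -> (forall j, In j A -> (1 <= j <= N)%nat) ->
  (l <= m)%nat -> Cl N A m x -> Cl N A l x.
Proof. intros HN HA Hlm [w [Hl [Hw [y [Hy ->]]]]]. apply pt_in_Cl; auto. lia. Qed.

Lemma fmap_inj N j y y' : (1 <= N)%nat -> fmap N j y = fmap N j y' -> y = y'.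
Proof. intros HN H. rewrite !fmap_eq in H. pose proof (rr_pos N HN).
  apply Rmult_eq_reg_l with (rr N); lra. Qed.

Lemma E_decomp N A x : (1 <= N)%nat -> (forall j, In j A -> (1 <= j <= N)%nat) ->
  attractor N A x -> exists j y, In j A /\ attractor N A y /\ 0 <= y <= 1 /\ x = fmap N j y.
Proof.
  intros HN HA Hx. destruct (Hx 1%nat (le_n _)) as [w [Hl [Hw [y0 [Hy0 Hx0]]]]].
  destruct w as [|j0 [|]]; try discriminate. apply Forall_cons_iff in Hw as [H1 _].
  simpl in Hx0. subst x. exists j0, y0. split; auto. split; [|split; auto].
  intros l Hl1. destruct (Hx (S l) ltac:(lia)) as [w [Hlw [Hw' [y' [Hy' Hx']]]]].
  destruct w as [|j w]; [discriminate|]. apply Forall_cons_iff in Hw' as [H2 Hw'']. simpl in Hx'.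
  assert (Hj0 : (j0 <= N)%nat) by (apply HA in H1; lia).
  assert (Hj : (j <= N)%nat) by (apply HA in H2; lia).
  assert (Hz : 0 <= fcomp N w y' <= 1) by (apply (fcomp_range N A); auto).
  pose proof (fmap_range N j0 y0 HN Hj0 Hy0) as [R1 _].
  pose proof (fmap_range N j _ HN Hj Hz) as [R2 _].
  rewrite <- Hx' in R2.
  assert (j = j0) by (apply (sep N j j0 (fmap N j0 y0)); auto). subst j.
  assert (y0 = fcomp N w y') by (apply (fmap_inj N j0); auto). subst y0.
  exists w. simpl in Hlw. split; [lia|]. split; auto. exists y'; auto.
Qed.



Lemma pair_ineq N a a' y y' p lam : (1 <= N)%nat -> 0 <= y <= 1 -> 0 <= y' <= 1 ->
  Rabs (fmap N a y - p) < rr N * lam -> Rabs (fmap N a' y' - (p + lam)) < rr N * lam ->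
  Rabs (6 * rr N * (INR a' - INR a) - lam) < 2 * rr N * lam + rr N.
Proof.
  intros HN Hy Hy' H1 H2. rewrite fmap_eq in H1, H2. pose proof (rr_pos N HN).
  assert (0 <= rr N * y <= rr N) by (split; nra).
  assert (0 <= rr N * y' <= rr N) by (split; nra).
  revert H1 H2. unfold Rabs. repeat destruct Rcase_abs; intros; lra.
Qed.

Lemma case_ineq r a a' lam : 0 < r <= 1/12 -> 0 < lam <= 1/2 ->
  Rabs (6 * r * (INR a' - INR a) - lam) < 2 * r * lam + r ->
  (a' = a /\ lam < 2 * r) \/ (lam > 4 * r /\ (a < a')%nat).
Proof.
  intros Hr Hl H. destruct (Nat.lt_trichotomy a a') as [Hlt|[He|Hlt]].
  - right. split; auto. apply le_INR in Hlt. rewrite S_INR in Hlt.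
    revert H; unfold Rabs; destruct Rcase_abs; intros; nra.
  - left. subst. split; auto. revert H; unfold Rabs; destruct Rcase_abs; intros; nra.
  - exfalso. apply le_INR in Hlt. rewrite S_INR in Hlt.
    revert H; unfold Rabs; destruct Rcase_abs; intros; nra.
Qed.

Lemma close_nat u v : Rabs (INR u - INR v) < 1 -> u = v.
Proof. intros H. destruct (Nat.lt_trichotomy u v) as [Hl|[He|Hl]]; auto;
  apply le_INR in Hl; rewrite S_INR in Hl; revert H; unfold Rabs; destruct Rcase_abs; intros; lra.
Qed.

Definition Hbad k N A x lam := forall i, (i < k)%nat ->
  exists e, attractor N A e /\ Rabs (e - (x + INR i * lam)) < rr N * lam.

Lemma Hbad_dec k N A x lam i : (1 <= N)%nat -> (forall j, In j A -> (1 <= j <= N)%nat) ->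
  Hbad k N A x lam -> (i < k)%nat -> exists a y, In a A /\ attractor N A y /\ 0 <= y <= 1 /\
    Rabs (fmap N a y - (x + INR i * lam)) < rr N * lam.
Proof. intros HN HA H Hi. destruct (H i Hi) as [e [He Hd]].
  destruct (E_decomp N A e HN HA He) as [a [y [Ha [Hy [Hy1 ->]]]]].
  exists a, y; auto. Qed.

Lemma big k N A x lam : (3 <= k)%nat -> (1 <= N)%nat -> (forall j, In j A -> (1 <= j <= N)%nat) ->
  lam > 1/2 -> Hbad k N A x lam -> False.
Proof.
  intros Hk HN HA Hl H.
  destruct (Hbad_dec k N A x lam 0 HN HA H ltac:(lia)) as [a0 [y0 [Ha0 [_ [Hy0 H0]]]]].
  destruct (Hbad_dec k N A x lam 2 HN HA H ltac:(lia)) as [a2 [y2 [Ha2 [_ [Hy2 H2]]]]].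
  apply HA in Ha0. apply HA in Ha2.
  destruct (fmap_range N a0 y0 HN ltac:(lia) Hy0) as [[R0 R0'] _].
  destruct (fmap_range N a2 y2 HN ltac:(lia) Hy2) as [[R2 R2'] _].
  pose proof (rr_pos N HN). pose proof (rr_le N HN). pose proof (rrN N HN).
  assert (I0 : 1 <= INR a0) by (apply (le_INR 1); lia).
  assert (I0' : INR a2 <= INR N) by (apply le_INR; lia).
  assert (6 * rr N <= 6 * INR a0 * rr N) by nra.
  assert (6 * INR a2 * rr N <= 6 * INR N * rr N) by nra.
  simpl in H0, H2. revert H0 H2. unfold Rabs; repeat destruct Rcase_abs; intros; nra.
Qed.

Lemma core k N A x lam : (3 <= k)%nat -> (1 <= N)%nat -> (forall j, In j A -> (1 <= j <= N)%nat) ->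
  ~ contains_nat_kAP k A ->
  0 < lam <= 1/2 -> Hbad k N A x lam -> exists x', Hbad k N A x' (lam / rr N).
Proof.
  intros Hk HN HA HAP Hl H. pose proof (rr_pos N HN) as Hr. pose proof (rr_le N HN) as Hr'.
  destruct (Hbad_dec k N A x lam 0 HN HA H ltac:(lia)) as [a0 [y0 [Ha0 [E0 [Hy0 H0]]]]].
  destruct (Hbad_dec k N A x lam 1 HN HA H ltac:(lia)) as [a1 [y1 [Ha1 [E1 [Hy1 H1]]]]].
  assert (P01 := pair_ineq N a0 a1 y0 y1 (x + INR 0 * lam) lam HN Hy0 Hy1 H0
     ltac:(replace (x + INR 0 * lam + lam) with (x + INR 1 * lam) by (simpl; ring); exact H1)).
  destruct (case_ineq (rr N) a0 a1 lam ltac:(lra) Hl P01) as [[Ha Hlam]|[Hlam Hlt]].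
  -
    assert (Hall : forall i, (i < k)%nat -> exists y, attractor N A y /\ 0 <= y <= 1 /\
       Rabs (fmap N a0 y - (x + INR i * lam)) < rr N * lam).
    { induction i as [|i IH]; intros Hi. exists y0; auto.
      destruct (IH ltac:(lia)) as [yi [Ei [Hyi Hi']]].
      destruct (Hbad_dec k N A x lam (S i) HN HA H Hi) as [a' [y' [Ha' [E' [Hy' H']]]]].
      assert (P := pair_ineq N a0 a' yi y' (x + INR i * lam) lam HN Hyi Hy' Hi'
        ltac:(replace (x + INR i * lam + lam) with (x + INR (S i) * lam) by (rewrite S_INR; ring); exact H')).
      destruct (case_ineq (rr N) a0 a' lam ltac:(lra) Hl P) as [[-> _]|[Hc _]]; [|lra].
      exists y'; auto. }
    exists ((x - 6 * INR a0 * rr N) / rr N). intros i Hi.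
    destruct (Hall i Hi) as [y [Ey [_ Hd]]]. exists y. split; auto.
    rewrite fmap_eq in Hd.
    replace (rr N * y + 6 * INR a0 * rr N - (x + INR i * lam)) with
      (rr N * (y - ((x - 6 * INR a0 * rr N) / rr N + INR i * (lam / rr N)))) in Hd by (field; lra).
    rewrite Rabs_mult, (Rabs_right (rr N)) in Hd by lra.
    replace (rr N * (lam / rr N)) with lam by (field; lra).
    apply Rmult_lt_reg_l with (rr N); lra.
  -
    exfalso. apply HAP. exists a0, (a1 - a0)%nat. split; [lia|].
    assert (Hall : forall i, (i < k)%nat -> exists y, attractor N A y /\ 0 <= y <= 1 /\ In (a0 + i * (a1 - a0))%nat A /\
       Rabs (fmap N (a0 + i * (a1 - a0))%nat y - (x + INR i * lam)) < rr N * lam).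
    { induction i as [|i IH]; intros Hi. exists y0. replace (a0 + 0 * (a1 - a0))%nat with a0 by lia. auto.
      destruct (IH ltac:(lia)) as [yi [Ei [Hyi [Hin Hi']]]].
      destruct (Hbad_dec k N A x lam (S i) HN HA H Hi) as [a' [y' [Ha' [E' [Hy' H']]]]].
      assert (P := pair_ineq N _ a' yi y' (x + INR i * lam) lam HN Hyi Hy' Hi'
        ltac:(replace (x + INR i * lam + lam) with (x + INR (S i) * lam) by (rewrite S_INR; ring); exact H')).
      assert (Heq : a' = (a0 + S i * (a1 - a0))%nat).
      { apply close_nat. rewrite plus_INR, mult_INR, minus_INR by lia.
        rewrite plus_INR, mult_INR, minus_INR in P by lia. rewrite S_INR.
        revert P P01. unfold Rabs; repeat destruct Rcase_abs; intros; nra. }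
      rewrite <- Heq. exists y'; auto. }
    intros i Hi. destruct (Hall i Hi) as [_ [_ [_ [Hin _]]]]. exact Hin.
Qed.

Lemma eps_part k N A : (3 <= k)%nat -> (1 <= N)%nat -> (forall j, In j A -> (1 <= j <= N)%nat) ->
  ~ contains_nat_kAP k A -> eps_avoids_kAP k (1 / (12 * INR N)) (attractor N A).
Proof.
  intros Hk HN HA HAP x lam Hl. apply NNPP. intros Hn.
  assert (H : Hbad k N A x lam).
  { intros i Hi. apply NNPP. intros Hn2. apply Hn. exists i. split; auto.
    intros e He. apply Rnot_lt_ge. intros Hlt. apply Hn2. exists e; split; auto. }
  clear Hn. pose proof (rr_pos N HN) as Hr. pose proof (rr_le N HN) as Hr'.
  assert (Hind : forall n x lam, rr N ^ n / 2 < lam -> Hbad k N A x lam -> False).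
  { induction n as [|n IHn]; intros x0 l0 Hl0 H0.
    - apply (big k N A x0 l0); auto; simpl in Hl0; lra.
    - destruct (Rle_lt_dec l0 (1/2)) as [Hle|Hgt].
      + assert (0 < l0). { assert (0 < rr N ^ S n) by (apply pow_lt; lra). lra. }
        destruct (core k N A x0 l0 Hk HN HA HAP ltac:(lra) H0) as [x' Hx'].
        apply (IHn x' (l0 / rr N)); auto.
        simpl in Hl0. apply Rmult_lt_reg_l with (rr N); auto.
        replace (rr N * (l0 / rr N)) with l0 by (field; lra). lra.
      + apply (big k N A x0 l0); auto. }
  destruct (pow_lt_1_zero (rr N) ltac:(rewrite Rabs_right; lra) (2 * lam) ltac:(lra)) as [n Hn].
  specialize (Hn n (le_n _)). rewrite Rabs_right in Hn by (apply Rle_ge, pow_le; lra).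
  apply (Hind n x lam); auto. lra.
Qed.



Lemma Rpower_pow_s x s l : 0 < x -> Rpower (x ^ l) s = Rpower x s ^ l.
Proof. intros Hx. rewrite <- (Rpower_pow l x Hx), <- Rpower_pow by (apply exp_pos).
  rewrite !Rpower_mult. f_equal. ring. Qed.

Lemma sum_step (len : nat) (c : R) m : 0 <= c ->
  sum_f_R0 (fun i => if (i <? len)%nat then c else 0) m <= INR len * c.
Proof.
  intros Hc. assert (forall m, sum_f_R0 (fun i => if (i <? len)%nat then c else 0) m
     = INR (Nat.min (S m) len) * c).
  { induction m0 as [|m0 IH]; simpl sum_f_R0.
    - destruct len; simpl; [ring|]. destruct (Nat.min 0 len); simpl; ring.
    - rewrite IH. destruct (Nat.ltb_spec (S m0) len).
      + rewrite !Nat.min_l by lia. rewrite (S_INR (S m0)). ring.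
      + rewrite !Nat.min_r by lia. ring. }
  rewrite H. apply Rmult_le_compat_r; auto. apply le_INR. lia.
Qed.

Lemma ln12N N : (1 <= N)%nat -> 0 < ln (12 * INR N).
Proof. intros HN. apply le_INR in HN. simpl in HN. rewrite <- ln_1. apply ln_increasing; lra. Qed.

Lemma ln_rr N : (1 <= N)%nat -> ln (rr N) = - ln (12 * INR N).
Proof. intros HN. apply le_INR in HN. simpl in HN. unfold rr. unfold Rdiv. rewrite Rmult_1_l.
  apply ln_Rinv. lra. Qed.

Lemma q_lt1 N n s : (1 <= N)%nat -> (1 <= n)%nat -> ln (INR n) / ln (12 * INR N) < s ->
  INR n * Rpower (rr N) s < 1.
Proof.
  intros HN Hn Hs. pose proof (ln12N N HN). apply le_INR in Hn. simpl in Hn.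
  unfold Rpower. rewrite ln_rr by auto. rewrite <- (exp_ln (INR n)) by lra.
  rewrite <- exp_plus, <- exp_0. apply exp_increasing.
  assert (ln (INR n) = (ln (INR n) / ln (12 * INR N)) * ln (12 * INR N)) by (field; lra).
  nra.
Qed.

Lemma upper N A s : (1 <= N)%nat -> (forall j, In j A -> (1 <= j <= N)%nat) -> A <> [] ->
  0 < s -> ln (INR (length A)) / ln (12 * INR N) < s ->
  hausdorff_measure_zero s (attractor N A).
Proof.
  intros HN HA HAne Hs HD delta Hdel eta Heta.
  set (n := length A). assert (Hn : (1 <= n)%nat) by (unfold n; destruct A; [congruence|simpl; lia]).
  pose proof (rr_pos N HN) as Hr. pose proof (rr_le N HN) as Hr'.
  set (q := INR n * Rpower (rr N) s).
  assert (Hq : 0 <= q < 1). { split. unfold q. apply Rmult_le_pos. apply pos_INR.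
    unfold Rpower; left; apply exp_pos. apply q_lt1; auto. }
  destruct (pow_lt_1_zero (rr N) ltac:(rewrite Rabs_right; lra) delta Hdel) as [l1 Hl1].
  destruct (pow_lt_1_zero q ltac:(rewrite Rabs_right; lra) eta Heta) as [l2 Hl2].
  set (l := S (Nat.max l1 l2)).
  specialize (Hl1 l ltac:(lia)). specialize (Hl2 l ltac:(lia)).
  rewrite Rabs_right in Hl1 by (apply Rle_ge, pow_le; lra).
  rewrite Rabs_right in Hl2 by (apply Rle_ge, pow_le; lra).
  set (W := words A l).
  exists (fun m x => (m < length W)%nat /\ exists y, 0 <= y <= 1 /\ x = fcomp N (nth m W []) y).
  exists (fun m => if (m <? length W)%nat then rr N ^ l else 0).
  split; [|split].
  - intros x Hx. destruct (Hx l ltac:(lia)) as [w [Hlw [Hw [y [Hy ->]]]]].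
    assert (Hin : In w W) by (apply in_words; auto).
    destruct (In_nth W w [] Hin) as [m [Hm Hnth]]. exists m. split; auto. exists y. rewrite Hnth. auto.
  - intros m. destruct (Nat.ltb_spec m (length W)).
    + split. split; [apply pow_le; lra | lra].
      intros x y [_ [u [Hu ->]]] [_ [v [Hv ->]]].
      assert (Hlen : length (nth m W []) = l) by (apply (in_words A l), nth_In; auto).
      rewrite (fcomp_affine N _ u), (fcomp_affine N _ v), Hlen.
      replace (fcomp N (nth m W []) 0 + rr N ^ l * u - (fcomp N (nth m W []) 0 + rr N ^ l * v))
        with (rr N ^ l * (u - v)) by ring.
      rewrite Rabs_mult, Rabs_right by (apply Rle_ge, pow_le; lra).
      assert (0 < rr N ^ l) by (apply pow_lt; lra).
      assert (Rabs (u - v) <= 1) by (unfold Rabs; destruct Rcase_abs; lra). nra.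
    + split. lra. intros x y [Hc _]. lia.
  - intros m. apply Rle_trans with (INR (length W) * Rpower (rr N) s ^ l).
    + eapply Rle_trans; [|apply (sum_step (length W) (Rpower (rr N) s ^ l) m)].
      * right. apply sum_eq. intros i _. unfold pw. destruct (i <? length W)%nat.
        -- destruct (Rlt_dec 0 (rr N ^ l)). apply Rpower_pow_s; auto.
           exfalso. apply n0. apply pow_lt; lra.
        -- destruct (Rlt_dec 0 0); [lra|auto].
      * apply pow_le. unfold Rpower; left; apply exp_pos.
    + unfold W. rewrite words_len, pow_INR. fold n. rewrite <- Rpow_mult_distr. fold q. lra.
Qed.



Definition ind (a b x : R) : nat :=
  if Rlt_dec a x then if Rlt_dec x b then 1%nat else 0%nat else 0%nat.

Fixpoint sumL {T} (L : list T) (f : T -> nat) : nat :=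
  match L with [] => 0%nat | x :: L' => (f x + sumL L' f)%nat end.

Definition cnt N A m a b := sumL (words A m) (fun w => ind a b (fcomp N w 0)).

Lemma sumL_app {T} (L1 L2 : list T) f : sumL (L1 ++ L2) f = (sumL L1 f + sumL L2 f)%nat.
Proof. induction L1; simpl; lia. Qed.

Lemma sumL_flat (A : list nat) (W : list (list nat)) f :
  sumL (flat_map (fun j => map (cons j) W) A) f = sumL A (fun j => sumL W (fun w => f (j :: w))).
Proof. induction A as [|j A IH]; simpl; auto. rewrite sumL_app, IH. f_equal.
  clear IH. induction W; simpl; auto. Qed.

Lemma sumL_ext {T} (L : list T) f g : (forall x, In x L -> f x = g x) -> sumL L f = sumL L g.
Proof. induction L; simpl; intros H; [auto|]. rewrite (H a) by auto. rewrite IHL by auto. auto. Qed.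

Lemma sumL_le {T} (L : list T) f g : (forall x, In x L -> (f x <= g x)%nat) -> (sumL L f <= sumL L g)%nat.
Proof. induction L; simpl; intros H; auto. specialize (IHL (fun x Hx => H x (or_intror Hx))).
  specialize (H a (or_introl eq_refl)). lia. Qed.

Lemma sumL_const1 {T} (L : list T) f : (forall x, In x L -> (f x <= 1)%nat) -> (sumL L f <= length L)%nat.
Proof. induction L; simpl; intros H; auto. specialize (IHL (fun x Hx => H x (or_intror Hx))).
  specialize (H a (or_introl eq_refl)). lia. Qed.

Lemma sumL_ge1 {T} (L : list T) f : (forall x, In x L -> (1 <= f x)%nat) -> (length L <= sumL L f)%nat.
Proof. induction L; simpl; intros H; auto. specialize (IHL (fun x Hx => H x (or_intror Hx))).
  specialize (H a (or_introl eq_refl)). lia. Qed.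

Lemma sumL_pos {T} (L : list T) f : (0 < sumL L f)%nat -> exists x, In x L /\ (0 < f x)%nat.
Proof. induction L; simpl; intros H. lia. destruct (f a) eqn:E.
  destruct IHL as [x [Hx Hf]]. lia. exists x; auto. exists a; split; auto; lia. Qed.

Lemma sumL_one (A : list nat) c K : NoDup A ->
  (forall j j', In j A -> In j' A -> (0 < c j)%nat -> (0 < c j')%nat -> j = j') ->
  (forall j, In j A -> (c j <= K)%nat) -> (sumL A c <= K)%nat.
Proof.
  induction A as [|a A IH]; simpl; intros Hnd Hu Hb. lia.
  inversion Hnd; subst. destruct (c a) eqn:E.
  - simpl. apply IH; auto.
  - assert (sumL A c = 0%nat).
    { destruct (sumL A c) eqn:E2; auto. exfalso.
      destruct (sumL_pos A c ltac:(lia)) as [x [Hx Hcx]].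
      assert (x = a) by (apply Hu; auto; lia). subst. auto. }
    specialize (Hb a (or_introl eq_refl)). lia.
Qed.

Lemma ind_le1 a b x : (ind a b x <= 1)%nat.
Proof. unfold ind. repeat destruct Rlt_dec; lia. Qed.

Lemma ind_pos a b x : (0 < ind a b x)%nat -> a < x < b.
Proof. unfold ind. repeat destruct Rlt_dec; intros; try lia. auto. Qed.

Lemma ind_in a b x : a < x < b -> ind a b x = 1%nat.
Proof. unfold ind. intros []. repeat destruct Rlt_dec; try lra; auto. Qed.

Lemma ind_scale r c a b x : 0 < r -> ind a b (r * x + c) = ind ((a - c) / r) ((b - c) / r) x.
Proof.
  intros Hr. assert (E1 : a < r * x + c <-> (a - c) / r < x).
  { split; intros H. apply Rmult_lt_reg_l with r; auto. replace (r * ((a - c) / r)) with (a - c) by (field; lra). lra.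
    apply Rmult_lt_compat_l with (r := r) in H; auto. replace (r * ((a - c) / r)) with (a - c) in H by (field; lra). lra. }
  assert (E2 : r * x + c < b <-> x < (b - c) / r).
  { split; intros H. apply Rmult_lt_reg_l with r; auto. replace (r * ((b - c) / r)) with (b - c) by (field; lra). lra.
    apply Rmult_lt_compat_l with (r := r) in H; auto. replace (r * ((b - c) / r)) with (b - c) in H by (field; lra). lra. }
  unfold ind. destruct (Rlt_dec a _), (Rlt_dec ((a - c) / r) x); try tauto.
  destruct (Rlt_dec _ b), (Rlt_dec x _); tauto.
Qed.

Lemma cnt_S N A m a b : (1 <= N)%nat -> cnt N A (S m) a b =
  sumL A (fun j => cnt N A m ((a - 6 * INR j * rr N) / rr N) ((b - 6 * INR j * rr N) / rr N)).
Proof.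
  intros HN. unfold cnt. simpl words. rewrite sumL_flat. apply sumL_ext. intros j _.
  apply sumL_ext. intros w _. rewrite fcomp_cons, fmap_eq. apply ind_scale. apply rr_pos; auto.
Qed.

Lemma pow_le_one x n : 0 <= x <= 1 -> x ^ n <= 1.
Proof. intros H. induction n; simpl. lra. assert (0 <= x ^ n) by (apply pow_le; lra). nra. Qed.

Lemma cnt_bound N A : (1 <= N)%nat -> (forall j, In j A -> (1 <= j <= N)%nat) -> NoDup A ->
  forall q m a b, (q <= m)%nat -> b - a <= 5 * rr N ^ q -> (cnt N A m a b <= length A ^ (m - q))%nat.
Proof.
  intros HN HA Hnd. pose proof (rr_pos N HN) as Hr. pose proof (rr_le N HN) as Hr'.
  induction q as [|q IH]; intros m a b Hqm Hab.
  - rewrite Nat.sub_0_r, <- words_len. apply sumL_const1. intros; apply ind_le1.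
  - destruct m as [|m]; [lia|]. rewrite cnt_S by auto. simpl (S m - S q)%nat.
    apply sumL_one; auto.
    + intros j j' Hj Hj' Hc Hc'. unfold cnt in Hc, Hc'.
      destruct (sumL_pos _ _ Hc) as [w [Hw Hi]]. destruct (sumL_pos _ _ Hc') as [w' [Hw' Hi']].
      apply ind_pos in Hi, Hi'. apply in_words in Hw as [_ Hw]. apply in_words in Hw' as [_ Hw'].
      assert (Hz := fcomp_range N A w 0 HN HA Hw ltac:(lra)).
      assert (Hz' := fcomp_range N A w' 0 HN HA Hw' ltac:(lra)).
      set (z := fcomp N w 0) in *. set (z' := fcomp N w' 0) in *.
      assert (a < rr N * z + 6 * INR j * rr N < b).
      { destruct Hi as [H1 H2]. split.
        apply Rmult_lt_compat_l with (r := rr N) in H1; auto.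
        replace (rr N * ((a - 6 * INR j * rr N) / rr N)) with (a - 6 * INR j * rr N) in H1 by (field; lra). lra.
        apply Rmult_lt_compat_l with (r := rr N) in H2; auto.
        replace (rr N * ((b - 6 * INR j * rr N) / rr N)) with (b - 6 * INR j * rr N) in H2 by (field; lra). lra. }
      assert (a < rr N * z' + 6 * INR j' * rr N < b).
      { destruct Hi' as [H1 H2]. split.
        apply Rmult_lt_compat_l with (r := rr N) in H1; auto.
        replace (rr N * ((a - 6 * INR j' * rr N) / rr N)) with (a - 6 * INR j' * rr N) in H1 by (field; lra). lra.
        apply Rmult_lt_compat_l with (r := rr N) in H2; auto.
        replace (rr N * ((b - 6 * INR j' * rr N) / rr N)) with (b - 6 * INR j' * rr N) in H2 by (field; lra). lra. }
      assert (rr N ^ S q <= rr N). { simpl. assert (rr N ^ q <= 1) by (apply pow_le_one; lra). nra. }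
      assert (0 <= rr N * z <= rr N) by (split; nra).
      assert (0 <= rr N * z' <= rr N) by (split; nra).
      destruct (Nat.lt_trichotomy j j') as [Hl|[He|Hl]]; auto; exfalso;
        apply le_INR in Hl; rewrite S_INR in Hl; nra.
    + intros j Hj. apply IH; [lia|].
      unfold Rdiv. replace ((b - 6 * INR j * rr N) * / rr N - (a - 6 * INR j * rr N) * / rr N)
        with ((b - a) / rr N) by (field; lra).
      apply Rmult_le_reg_l with (rr N); auto. replace (rr N * ((b - a) / rr N)) with (b - a) by (field; lra).
      simpl in Hab. lra.
Qed.

Fixpoint sumN (K : nat) (g : nat -> nat) : nat :=
  match K with O => g O | S K' => (sumN K' g + g K)%nat end.

Lemma sumL_sumN {T} (L : list T) K h :
  sumL L (fun w => sumN K (fun i => h i w)) = sumN K (fun i => sumL L (h i)).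
Proof. induction K as [|K IH]; simpl. auto.
  rewrite <- IH. clear IH. induction L; simpl; auto. rewrite IHL. lia. Qed.

Lemma sumN_pos K g : (exists i, (i <= K)%nat /\ (1 <= g i)%nat) -> (1 <= sumN K g)%nat.
Proof. induction K as [|K IH]; simpl; intros [i [Hi Hg]].
  replace i with 0%nat in Hg by lia. auto.
  destruct (Nat.eq_dec i (S K)). subst; lia. assert (1 <= sumN K g)%nat by (apply IH; exists i; split; auto; lia). lia. Qed.

Lemma sumN_le K g h : (forall i, (i <= K)%nat -> (g i <= h i)%nat) -> (sumN K g <= sumN K h)%nat.
Proof. induction K; simpl; intros H. apply H; lia.
  assert (sumN K g <= sumN K h)%nat by (apply IHK; intros; apply H; lia). specialize (H (S K) (le_n _)). lia. Qed.

Lemma INR_sumN K g : INR (sumN K g) = sum_f_R0 (fun i => INR (g i)) K.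
Proof. induction K; simpl sumN; simpl sum_f_R0; auto. rewrite plus_INR, IHK. auto. Qed.

Lemma count_cover N A K (a b : nat -> R) (q : nat -> nat) m :
  (1 <= N)%nat -> (forall j, In j A -> (1 <= j <= N)%nat) -> NoDup A -> A <> [] ->
  (forall i, (i <= K)%nat -> (q i <= m)%nat /\ b i - a i <= 5 * rr N ^ q i) ->
  (forall w, In w (words A m) -> exists i, (i <= K)%nat /\ a i < fcomp N w 0 < b i) ->
  1 <= sum_f_R0 (fun i => (/ INR (length A)) ^ q i) K.
Proof.
  intros HN HA Hnd Hne Hq Hcov. set (n := length A).
  assert (Hn : 1 <= INR n) by (apply (le_INR 1); unfold n; destruct A; [congruence|simpl; lia]).
  assert (Hnat : (n ^ m <= sumN K (fun i => n ^ (m - q i)))%nat).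
  { unfold n. rewrite <- words_len.
    eapply Nat.le_trans. apply (sumL_ge1 _ (fun w => sumN K (fun i => ind (a i) (b i) (fcomp N w 0)))).
    intros w Hw. apply sumN_pos. destruct (Hcov w Hw) as [i [Hi Hab]]. exists i. split; auto.
    rewrite ind_in; auto.
    rewrite (sumL_sumN (words A m) K (fun i w => ind (a i) (b i) (fcomp N w 0))).
    apply sumN_le. intros i Hi. destruct (Hq i Hi) as [H1 H2].
    apply (cnt_bound N A HN HA Hnd (q i) m); auto. }
  apply le_INR in Hnat. rewrite INR_sumN, pow_INR in Hnat.
  assert (Hm : 0 < INR n ^ m) by (apply pow_lt; lra).
  apply Rmult_le_reg_l with (INR n ^ m); auto. rewrite Rmult_1_r.
  eapply Rle_trans; [exact Hnat|]. rewrite scal_sum. right. apply sum_eq. intros i Hi.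
  destruct (Hq i Hi) as [H1 _]. rewrite pow_INR.
  replace m with ((m - q i) + q i)%nat at 2 by lia. rewrite pow_add.
  rewrite Rmult_comm, Rmult_assoc, <- Rpow_mult_distr, Rinv_r, pow1 by lra. ring.
Qed.



Lemma list_bound (l : list R) : exists K : nat, forall y, In y l -> y <= INR K.
Proof.
  induction l as [|a l [K HK]]. exists 0%nat; intros y [].
  destruct (INR_unbounded a) as [K' HK'].
  exists (Nat.max K K'). intros y [<-|Hy].
  - assert (INR K' <= INR (Nat.max K K')) by (apply le_INR; lia). lra.
  - assert (INR K <= INR (Nat.max K K')) by (apply le_INR; lia). specialize (HK y Hy). lra.
Qed.

Lemma finite_sub (Wf : nat -> R -> Prop) :
  (forall M K z, (M <= K)%nat -> Wf M z -> Wf K z) ->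
  (forall M z, Wf M z -> exists d, 0 < d /\ forall y, Rabs (y - z) < d -> Wf M y) ->
  (forall z, 0 <= z <= 1 -> exists M, Wf M z) ->
  exists K, forall z, 0 <= z <= 1 -> Wf K z.
Proof.
  intros Hmono Hopen Hcov.
  assert (Hc : forall x, (exists y, (fun x z => exists M : nat, x = INR M /\ Wf M z) x y) ->
                 (fun x => exists M : nat, x = INR M) x).
  { intros x [y [M [HM _]]]. exists M; auto. }
  set (fam := mkfamily (fun x => exists M : nat, x = INR M) (fun x z => exists M : nat, x = INR M /\ Wf M z) Hc).
  destruct (compact_P3 0 1 fam) as [D [Hcov' [l Hl]]].
  - split.
    + intros z Hz. destruct (Hcov z Hz) as [M HM]. exists (INR M). simpl. exists M; auto.
    + intros x z [M [-> HM]]. destruct (Hopen M z HM) as [d [Hd Hy]].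
      exists (mkposreal d Hd). intros y Hy'. simpl. exists M. split; auto.
  - destruct (list_bound l) as [K HK]. exists K. intros z Hz.
    destruct (Hcov' z Hz) as [y [[M [-> HM]] HD]].
    assert (Hin : In (INR M) l). { apply Hl. split; auto. exists M; auto. }
    apply HK, INR_le in Hin. eapply Hmono; eauto.
Qed.

Lemma Cl_iff N A l z : (1 <= N)%nat -> (forall j, In j A -> (1 <= j <= N)%nat) ->
  (Cl N A l z <-> exists w, In w (words A l) /\ fcomp N w 0 <= z <= fcomp N w 0 + rr N ^ l).
Proof.
  intros HN HA. pose proof (rr_pos N HN). assert (0 < rr N ^ l) by (apply pow_lt; lra). split.
  - intros [w [Hl [Hw [y [Hy ->]]]]]. exists w. split. apply in_words; auto.
    rewrite (fcomp_affine N w y), Hl. split; nra.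
  - intros [w [Hw Hz]]. apply in_words in Hw as [Hl Hw]. exists w. split; auto. split; auto.
    exists ((z - fcomp N w 0) / rr N ^ l). split.
    + split. apply Rmult_le_pos; [lra|]. left; apply Rinv_0_lt_compat; auto.
      apply Rmult_le_reg_l with (rr N ^ l); auto. replace (rr N ^ l * ((z - fcomp N w 0) / rr N ^ l)) with (z - fcomp N w 0) by (field; lra). lra.
    + rewrite fcomp_affine, Hl. field. lra.
Qed.

Lemma avoid_open (L : list (list nat)) (g : list nat -> R) h z :
  (forall w, In w L -> ~ (g w <= z <= g w + h)) ->
  exists d, 0 < d /\ forall y, Rabs (y - z) < d -> forall w, In w L -> ~ (g w <= y <= g w + h).
Proof.
  induction L as [|w0 L IH]; intros H.
  - exists 1. split. lra. intros y _ w [].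
  - destruct IH as [d [Hd Hy]]. intros w Hw; apply H; simpl; auto.
    assert (H0 := H w0 (or_introl eq_refl)).
    assert (Hd0 : exists d0, 0 < d0 /\ forall y, Rabs (y - z) < d0 -> ~ (g w0 <= y <= g w0 + h)).
    { destruct (Rlt_le_dec z (g w0)).
      - exists (g w0 - z). split. lra. intros y Hy' [Ha1 Ha2]. revert Hy'; unfold Rabs; destruct Rcase_abs; intros; lra.
      - assert (g w0 + h < z) by (apply Rnot_le_lt; intros Hc; apply H0; split; auto).
        exists (z - (g w0 + h)). split. lra. intros y Hy' [Ha1 Ha2]. revert Hy'; unfold Rabs; destruct Rcase_abs; intros; lra. }
    destruct Hd0 as [d0 [Hd0 Hy0]]. exists (Rmin d d0). split. apply Rmin_pos; auto.
    intros y Hyz w [<-|Hw]. apply Hy0. eapply Rlt_le_trans; [exact Hyz| apply Rmin_r].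
    apply Hy; auto. eapply Rlt_le_trans; [exact Hyz| apply Rmin_l].
Qed.

Lemma notCl_open N A l z : (1 <= N)%nat -> (forall j, In j A -> (1 <= j <= N)%nat) ->
  ~ Cl N A l z -> exists d, 0 < d /\ forall y, Rabs (y - z) < d -> ~ Cl N A l y.
Proof.
  intros HN HA Hz.
  destruct (avoid_open (words A l) (fun w => fcomp N w 0) (rr N ^ l) z) as [d [Hd Hy]].
  - intros w Hw Hc. apply Hz. apply Cl_iff; auto. exists w; auto.
  - exists d. split; auto. intros y Hyz Hc. apply Cl_iff in Hc as [w [Hw Hc]]; auto.
    apply (Hy y Hyz w Hw Hc).
Qed.



Lemma exp_le x y : x <= y -> exp x <= exp y.
Proof. intros [H|H]. left; apply exp_increasing; auto. subst; lra. Qed.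

Lemma Rpower_pos x y : 0 < Rpower x y.
Proof. unfold Rpower. apply exp_pos. Qed.

Lemma q_exists r l : 0 < r < 1 -> 0 < l <= 5 -> exists q, 5 * r ^ S q < l <= 5 * r ^ q.
Proof.
  intros Hr Hl. destruct (pow_lt_1_zero r ltac:(rewrite Rabs_right; lra) (l / 5) ltac:(lra)) as [Q HQ].
  specialize (HQ Q (le_n _)). rewrite Rabs_right in HQ by (apply Rle_ge, pow_le; lra).
  assert (HQ' : 5 * r ^ Q < l) by lra. clear HQ. induction Q as [|Q IH].
  - simpl in HQ'; lra.
  - destruct (Rle_lt_dec l (5 * r ^ Q)). exists Q; split; auto. apply IH; auto.
Qed.

Lemma nat_bound (g : nat -> nat) K : exists m, forall i, (i <= K)%nat -> (g i <= m)%nat.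
Proof. induction K as [|K [m Hm]]. exists (g 0%nat). intros i Hi. replace i with 0%nat by lia. lia.
  exists (Nat.max m (g (S K))). intros i Hi. destruct (Nat.eq_dec i (S K)). subst; lia.
  specialize (Hm i ltac:(lia)). lia. Qed.

Lemma geom_sum K : sum_f_R0 (fun i => (1/2) ^ S i) K <= 1.
Proof. assert (forall K, sum_f_R0 (fun i => (1/2) ^ S i) K = 1 - (1/2) ^ S K).
  { induction K0. simpl; lra. rewrite tech5, IHK0. change ((1/2)^(S (S K0))) with (1/2 * (1/2)^(S K0)). lra. }
  rewrite H. assert (0 < (1/2) ^ S K) by (apply pow_lt; lra). lra. Qed.

Lemma inv_n_Rpower N n : (1 <= N)%nat -> (1 <= n)%nat ->
  / INR n = Rpower (rr N) (ln (INR n) / ln (12 * INR N)).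
Proof. intros HN Hn. pose proof (ln12N N HN). apply le_INR in Hn. simpl in Hn.
  unfold Rpower. rewrite ln_rr by auto.
  replace (ln (INR n) / ln (12 * INR N) * - ln (12 * INR N)) with (- ln (INR n)) by (field; lra).
  rewrite exp_Ropp, exp_ln; auto. lra. Qed.

Lemma weight_bound N n s q l d rho : (1 <= N)%nat -> (1 <= n)%nat ->
  0 < s <= ln (INR n) / ln (12 * INR N) -> s <= 1 ->
  5 * rr N ^ S q < l -> l = 2 * (d + rho) -> 0 <= d -> 0 < rho -> l <= 1 ->
  (/ INR n) ^ q <= 4 * INR n * (pw d s + Rpower rho s).
Proof.
  intros HN Hn Hs Hs1 Hq Hl Hd Hrho Hl1. set (D := ln (INR n) / ln (12 * INR N)) in *.
  pose proof (rr_pos N HN) as Hr. assert (Hn' : 1 <= INR n) by (apply (le_INR 1); auto).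
  assert (E1 : (/ INR n) ^ q = INR n * (/ INR n) ^ S q).
  { simpl. field. lra. }
  assert (E2 : (/ INR n) ^ S q = Rpower (rr N ^ S q) D).
  { unfold D. rewrite Rpower_pow_s by auto. rewrite <- inv_n_Rpower by auto. reflexivity. }
  assert (B1 : Rpower (rr N ^ S q) D <= Rpower l D).
  { apply Rle_Rpower_l. lra. split. apply pow_lt; lra. assert (0 < rr N ^ S q) by (apply pow_lt; lra). lra. }
  assert (Hlpos : 0 < l) by lra.
  assert (B2 : Rpower l D <= Rpower l s).
  { unfold Rpower. apply exp_le. assert (ln l <= 0). { rewrite <- ln_1. destruct Hl1 as [Hl1|Hl1]. left; apply ln_increasing; lra. rewrite Hl1; lra. }
    nra. }
  assert (B3 : Rpower l s <= 4 * (pw d s + Rpower rho s)).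
  { assert (Hm : l <= 4 * Rmax d rho). { unfold Rmax. destruct Rle_dec; lra. }
    assert (0 < Rmax d rho) by (unfold Rmax; destruct Rle_dec; lra).
    apply Rle_trans with (Rpower (4 * Rmax d rho) s). apply Rle_Rpower_l; lra.
    rewrite <- Rpower_mult_distr by lra.
    assert (Rpower 4 s <= 4). { rewrite <- (Rpower_1 4) at 2 by lra. apply Rle_Rpower; lra. }
    assert (Rpower (Rmax d rho) s <= pw d s + Rpower rho s).
    { pose proof (Rpower_pos d s). pose proof (Rpower_pos rho s).
      unfold Rmax, pw. destruct Rle_dec; destruct Rlt_dec; lra. }
    pose proof (Rpower_pos (Rmax d rho) s). nra. }
  rewrite E1, E2. assert (0 < INR n) by lra. nra.
Qed.

Lemma lower N A s : (1 <= N)%nat -> (forall j, In j A -> (1 <= j <= N)%nat) -> NoDup A -> A <> [] ->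
  0 < s -> s < ln (INR (length A)) / ln (12 * INR N) ->
  hausdorff_measure_zero s (attractor N A) -> False.
Proof.
  intros HN HA Hnd Hne Hs HsD H0.
  set (n := length A) in *.
  assert (Hn1 : (1 <= n)%nat) by (unfold n; destruct A; [congruence|simpl; lia]).
  assert (HnN : (n <= N)%nat).
  { unfold n. rewrite <- (length_seq N 1). apply NoDup_incl_length; auto.
    intros x Hx. apply in_seq. apply HA in Hx. lia. }
  pose proof (rr_pos N HN) as Hr. pose proof (rr_le N HN) as Hr'.
  pose proof (ln12N N HN) as HL.
  assert (HnR : 1 <= INR n) by (apply (le_INR 1); auto).
  assert (Hs1 : s <= 1).
  { assert (ln (INR n) < ln (12 * INR N)).
    { apply ln_increasing. lra. apply le_INR in HnN. apply le_INR in HN. simpl in HN. lra. }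
    assert (ln (INR n) / ln (12 * INR N) < 1). { apply Rmult_lt_reg_r with (ln (12 * INR N)); auto.
      unfold Rdiv. rewrite Rmult_assoc, Rinv_l, Rmult_1_r, Rmult_1_l by lra. auto. }
    lra. }
  set (eta := / (16 * INR n)).
  assert (Heta : 0 < eta) by (unfold eta; apply Rinv_0_lt_compat; lra).
  destruct (H0 (1/8) ltac:(lra) eta Heta) as [U [d [Hcov [Hd Hsum]]]].
  set (rho := fun i : nat => Rmin (1/8) (Rpower (eta * (1/2) ^ S i) (/ s))).
  assert (Hrho : forall i, 0 < rho i <= 1/8).
  { intros i. unfold rho. split. apply Rmin_pos. lra. apply Rpower_pos. apply Rmin_l. }
  assert (Hrhos : forall i, Rpower (rho i) s <= eta * (1/2) ^ S i).
  { intros i. assert (0 < eta * (1/2) ^ S i) by (apply Rmult_lt_0_compat; auto; apply pow_lt; lra).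
    apply Rle_trans with (Rpower (Rpower (eta * (1/2) ^ S i) (/ s)) s).
    apply Rle_Rpower_l. lra. split. apply Hrho. apply Rmin_r.
    rewrite Rpower_mult, Rinv_l, Rpower_1 by lra. lra. }
  set (c := fun i => epsilon (inhabits 0) (U i)).
  set (a := fun i => c i - d i - rho i). set (b := fun i => c i + d i + rho i).
  assert (HU : forall i x, U i x -> a i < x < b i).
  { intros i x Hx. assert (Hc : U i (c i)) by (apply epsilon_spec; exists x; auto).
    destruct (Hd i) as [_ Hdi]. specialize (Hdi x (c i) Hx Hc). specialize (Hrho i).
    unfold a, b. revert Hdi; unfold Rabs; destruct Rcase_abs; intros; lra. }
  set (Wf := fun M z => (exists i, (i <= M)%nat /\ a i < z < b i) \/ ~ Cl N A (S M) z).
  destruct (finite_sub Wf) as [K HK].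
  - intros M K z HMK [[i [Hi Hz]]|Hz]. left; exists i; split; auto; lia.
    right. intros Hc. apply Hz. apply (Cl_mono N A (S M) (S K)); auto. lia.
  - intros M z [[i [Hi Hz]]|Hz].
    + exists (Rmin (z - a i) (b i - z)). split. apply Rmin_pos; lra.
      intros y Hy. left. exists i. split; auto.
      assert (Hm1 := Rmin_l (z - a i) (b i - z)). assert (Hm2 := Rmin_r (z - a i) (b i - z)).
      revert Hy; unfold Rabs; destruct Rcase_abs; intros; lra.
    + destruct (notCl_open N A (S M) z HN HA Hz) as [dd [Hdd Hy]].
      exists dd. split; auto. intros y Hy'. right. apply Hy; auto.
  - intros z Hz. destruct (classic (attractor N A z)) as [HE|HE].
    + destruct (Hcov z HE) as [i Hi]. exists i. left. exists i. split; auto.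
    + apply not_all_ex_not in HE as [l Hl].
      apply imply_to_and in Hl as [Hl1 Hl2]. exists l. right. intros Hc. apply Hl2.
      apply (Cl_mono N A l (S l)); auto.
  - set (len := fun i => b i - a i).
    assert (Hlen : forall i, len i = 2 * (d i + rho i)) by (intros; unfold len, a, b; ring).
    assert (Hlen2 : forall i, 0 < len i <= 1/2).
    { intros i. rewrite Hlen. destruct (Hd i) as [[Hd1 Hd2] _]. specialize (Hrho i). lra. }
    set (qf := fun i => epsilon (inhabits 0%nat) (fun q => 5 * rr N ^ S q < len i <= 5 * rr N ^ q)).
    assert (Hqf : forall i, 5 * rr N ^ S (qf i) < len i <= 5 * rr N ^ qf i).
    { intros i. unfold qf. apply epsilon_spec. apply q_exists. lra. specialize (Hlen2 i). lra. }
    destruct (nat_bound qf K) as [m0 Hm0].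
    set (m := Nat.max m0 (S K)).
    assert (Hone : 1 <= sum_f_R0 (fun i => (/ INR n) ^ qf i) K).
    { apply (count_cover N A K a b qf m HN HA Hnd Hne).
      - intros i Hi. split. specialize (Hm0 i Hi). lia. apply (Hqf i).
      - intros w Hw. apply in_words in Hw as [Hwl Hw].
        assert (Hp : Cl N A (S K) (fcomp N w 0)) by (apply pt_in_Cl; auto; [unfold m in *; lia | lra]).
        assert (Hp01 : 0 <= fcomp N w 0 <= 1) by (apply (fcomp_range N A); auto; lra).
        destruct (HK _ Hp01) as [Hl|Hl]; auto. contradiction. }
    assert (Hbound : forall i, (/ INR n) ^ qf i <= 4 * INR n * (pw (d i) s + Rpower (rho i) s)).
    { intros i. apply (weight_bound N n s (qf i) (len i) (d i) (rho i)); auto; try lra.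
      apply Hqf. apply Hd. apply Hrho. specialize (Hlen2 i); lra. }
    assert (Hsum2 : sum_f_R0 (fun i => (/ INR n) ^ qf i) K <=
       4 * INR n * (sum_f_R0 (fun i => pw (d i) s) K + eta * sum_f_R0 (fun i => (1/2) ^ S i) K)).
    { rewrite scal_sum with (x := eta).
      rewrite <- plus_sum. rewrite scal_sum. apply sum_Rle. intros i _.
      specialize (Hbound i). specialize (Hrhos i). nra. }
    specialize (Hsum K). pose proof (geom_sum K).
    assert (4 * INR n * eta = /4) by (unfold eta; field; lra).
    assert (0 <= sum_f_R0 (fun i => (1/2) ^ S i) K).
    { apply cond_pos_sum. intros; apply pow_le; lra. }
    nra.
Qed.


Theorem mainTheorem8 (k N : nat) (A : list nat) :
  (3 <= k)%nat -> (1 <= N)%nat ->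
  A <> [] -> NoDup A -> (forall j, In j A -> (1 <= j <= N)%nat) ->
  ~ contains_nat_kAP k A ->
  hausdorff_dim_eq (attractor N A) (ln (INR (length A)) / ln (12 * INR N)) /\
  eps_avoids_kAP k (1 / (12 * INR N)) (attractor N A).
Proof.
  intros Hk HN Hne Hnd HA HAP. split.
  - set (D := ln (INR (length A)) / ln (12 * INR N)).
    assert (HD : 0 <= D).
    { unfold D. pose proof (ln12N N HN). apply Rmult_le_pos.
      rewrite <- ln_1. assert (1 <= INR (length A)) by (apply (le_INR 1); destruct A; [congruence|simpl; lia]).
      destruct H0 as [H0|H0]. left; apply ln_increasing; lra. rewrite H0; lra.
      left; apply Rinv_0_lt_compat; auto. }
    split.
    + intros s [Hs H]. destruct (Rlt_le_dec s D) as [Hlt|Hle]; auto.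
      exfalso. apply (lower N A s HN HA Hnd Hne Hs Hlt H).
    + intros bb Hb. apply Rnot_lt_le. intros Hlt.
      assert (Hs : 0 < (bb + D) / 2) by lra.
      assert (H := Hb ((bb + D) / 2) (conj Hs (upper N A _ HN HA Hne Hs ltac:(unfold D in *; lra)))).
      lra.
  - apply eps_part; auto.
Qed.
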